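(* Let $\mathbb{K}$ be a field of characteristic zero containing all complex roots of unity, $q$ transcendental over $\mathbb{K}$, $\mathbb{W}=\mathbb{K}(q)[M]\langle L\rangle$ the first $q$-Weyl algebra and $\mathbb{O}=\mathbb{K}(q,M)\langle L\rangle$. Fix a nonzero $P\in\mathbb{W}$ and a complex $m$-th root of unity $\omega$, and let $\tau_\omega(P)$ be defined as in the context. Then $\tau_\omega(P)\in\mathbb{K}(q)[M^m]\langle L\rangle$ and $S(P)\subseteq S(\tau_\omega(P))$.
   Context: In $\mathbb{W}$ and $\mathbb{O}$ the relation $LM=qML$ holds ($L$ acts on sequences by $Lf_n=f_{n+1}$, $M$ by $Mf_n=q^nf_n$). The operator $\tau_\omega(P)$ is the annihilator of the twisted sequence produced from $P$ as follows: take a nonzero element $A$ of minimal order in $L$ of the left ideal $\mathbb{O}P\cap\mathbb{K}(q,M^m)\langle L\rangle$ (i.e. an element of $\mathbb{O}P$ in which $M$ occurs only with exponents divisible by $m$), clear denominators so that $A=\sum_j c_j(q,M)L^j$ with polynomial coefficients in $M^m$ that are content-free, $\gcd(c_0,\dots,c_d)=1$, and then substitute $q\to\omega q$; if $Pf_n(q)=0$ then $\tau_\omega(P)f_n(\omega q)=0$. Newton polygon: for $P\in\mathbb{W}$ written as a sum of monomials $M^bL^a$ with coefficients in $\mathbb{K}(q)$, $N(P)$ is the convex hull in $\mathbb{R}^2$ of the exponent pairs $(a,b)$ occurring. $LN(P)$ is the lower convex hull of $N(P)$, consisting of finitely many non-vertical line segments and two vertical rays; $S(P)$ denotes the set of slopes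 of the non-vertical segments of $LN(P)$. *)

(* Defs.v *)
From HB Require Import structures.
From mathcomp Require Import all_boot all_order all_algebra.
Set Implicit Arguments. Unset Strict Implicit. Unset Printing Implicit Defensive.
Import Order.TTheory GRing.Theory Num.Theory.
Local Open Scope ring_scope.

(* Kq     := K(q) = {fraction {poly K}}, q the (transcendental) indeterminate.
   KqM    := K(q,M) = {fraction {poly Kq}}.
   W  = K(q)[M]<L> : elements represented as  P : {poly {poly Kq}}, P = sum_a P`_a(M) L^a
        (so the coefficient of the monomial M^b L^a is (P`_a)`_b).
   O  = K(q,M)<L>  : elements represented as  A : {poly KqM}, A = sum_a A`_a L^a,
        with the skew product  L c(M) = c(qM) L  (omul below). *)

Section Defs.
Variable K : fieldType.

Definition Kq := {fraction {poly K}}.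
Definition KqM := {fraction {poly Kq}}.

Definition fnum (R : idomainType) (f : {fraction R}) : R := (frac (repr f)).1.
Definition fden (R : idomainType) (f : {fraction R}) : R := (frac (repr f)).2.

Definition qK : Kq := tofrac ('X : {poly K}).

Definition sigma_pow (i : nat) (f : KqM) : KqM :=
  let s := (qK ^+ i) *: ('X : {poly Kq}) in
  tofrac (fnum f \Po s) / tofrac (fden f \Po s).

Definition omul (A B : {poly KqM}) : {poly KqM} :=
  \sum_(i < size A) \sum_(j < size B) (A`_i * sigma_pow i B`_j) *: 'X^(i + j).

Definition embedW (P : {poly {poly Kq}}) : {poly KqM} :=
  map_poly (fun c : {poly Kq} => tofrac c) P.

Definition in_left_ideal (P : {poly {poly Kq}}) (A : {poly KqM}) : Prop :=
  exists B : {poly KqM}, A = omul B (embedW P).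

Definition polyMm (m : nat) (p : {poly Kq}) : Prop :=
  forall i : nat, ~~ (m %| i)%N -> p`_i = 0.

Definition fracMm (m : nat) (f : KqM) : Prop :=
  exists n d : {poly Kq}, [/\ d != 0, polyMm m n, polyMm m d & f = tofrac n / tofrac d].

Definition opMm (m : nat) (A : {poly KqM}) : Prop := forall j : nat, fracMm m A`_j.

Definition WopMm (m : nat) (A : {poly {poly Kq}}) : Prop := forall j : nat, polyMm m A`_j.

Definition content_free (A : {poly {poly Kq}}) : Prop :=
  forall g : {poly Kq}, (forall j : nat, g %| A`_j) -> (size g <= 1)%N.

Definition subst_q (w : K) (f : Kq) : Kq :=
  let s := w *: ('X : {poly K}) in
  tofrac (fnum f \Po s) / tofrac (fden f \Po s).

Definition subst_q_op (w : K) (A : {poly {poly Kq}}) : {poly {poly Kq}} :=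
  map_poly (map_poly (subst_q w)) A.

Definition is_tau (m : nat) (w : K) (P T : {poly {poly Kq}}) : Prop :=
  exists (A : {poly KqM}) (u : KqM) (A' : {poly {poly Kq}}),
    [/\ A != 0, in_left_ideal P A, opMm m A &
        (forall B : {poly KqM}, B != 0 -> in_left_ideal P B -> opMm m B ->
           (size A <= size B)%N)] /\
    [/\ u != 0, embedW A' = u *: A, WopMm m A',
        content_free A' & T = subst_q_op w A'].

Definition newton_pt (P : {poly {poly Kq}}) (a b : nat) : bool := (P`_a)`_b != 0.

(* s is the slope of a non-vertical segment of the lower hull LN(P):
   there is a line of slope s through two distinct exponent pairs
   lying (weakly) below every exponent pair of P *)
Definition slope_of (P : {poly {poly Kq}}) (s : rat) : Prop :=
  exists a1 b1 a2 b2 : nat,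
    [/\ (a1 < a2)%N, newton_pt P a1 b1, newton_pt P a2 b2,
        b2%:Q = b1%:Q + s * (a2%:Q - a1%:Q) &
        forall a b : nat, newton_pt P a b -> b1%:Q + s * (a%:Q - a1%:Q) <= b%:Q].

End Defs.

(* Main.v *)
Require Import Defs.
From HB Require Import structures.
From mathcomp Require Import all_boot all_order all_algebra.
From mathcomp Require Import ring lra.
Import Order.TTheory GRing.Theory Num.Theory.
Local Open Scope ring_scope.


Section FracE.
Local Open Scope quotient_scope.
Lemma fracE (R : idomainType) (f : {fraction R}) :
  fden f != 0 /\ f = tofrac (fnum f) / tofrac (fden f).
Proof.
rewrite /fnum /fden; split; first exact: denom_ratioP.
apply/(@mulIf _ (tofrac (frac (repr f)).2)); first by rewrite tofrac_eq0 denom_ratioP.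
rewrite mulfVK ?tofrac_eq0 ?denom_ratioP //.
rewrite -{1}[f]reprK.
case: (repr f) => [[n d] /= hd].
unlock tofrac.
transitivity (\pi_{fraction R} (FracField.mulf (@mkRatio _ (n,d) hd) (Ratio d 1))).
  by rewrite FracField.pi_mul.
apply/eqmodP; rewrite /= FracField.equivfE /FracField.mulf /=.
by rewrite !numden_Ratio ?oner_eq0 ?mulf_neq0 ?oner_eq0 // mulr1 mulr1 mulrC.
Qed.
End FracE.

Lemma natQD (n m : nat) : (n + m)%N%:Q = n%:Q + m%:Q.
Proof. by rewrite PoszD intrD. Qed.

Lemma natQB (n m : nat) : (m <= n)%N -> (n - m)%N%:Q = n%:Q - m%:Q.
Proof. by move=> h; rewrite -[in RHS](subnK h) natQD; ring. Qed.

Lemma coef_compZX (R : comNzRingType) (c : R) (p : {poly R}) n :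
  (p \Po (c *: 'X))`_n = c ^+ n * p`_n.
Proof.
rewrite coef_comp_poly.
under eq_bigr => i _ do rewrite exprZn coefZ coefXn.
case: (ltnP n (size p)) => hn.
  rewrite (bigD1 (Ordinal hn)) //= eqxx mulr1 big1 ?addr0; first by rewrite mulrC.
  move=> [i hi] /=; rewrite -(inj_eq val_inj) /= eq_sym => /negbTE ->.
  by rewrite mulr0 mulr0.
rewrite big1 ?(nth_default 0 hn) ?mulr0 //.
move=> [i hi] _ /=; case: eqP => [e|]; last by rewrite !mulr0.
by move: hi; rewrite -e ltnNge hn.
Qed.

Lemma compZX_eq0 (R : idomainType) (c : R) (p : {poly R}) :
  c != 0 -> (p \Po (c *: 'X) == 0) = (p == 0).
Proof.
move=> hc; apply/eqP/eqP => [h|->]; last by rewrite comp_poly0.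
apply/polyP => n; have := congr1 (fun q : {poly R} => q`_n) h.
rewrite coef_compZX coef0 => /eqP; rewrite mulf_eq0 expf_eq0 (negbTE hc) andbF /=.
by move/eqP.
Qed.

Lemma lowest (R : nzRingType) (p : {poly R}) : p != 0 ->
  exists b, p`_b != 0 /\ forall j, (j < b)%N -> p`_j = 0.
Proof.
move=> hp.
have ex : exists n, p`_n != 0 by exists (size p).-1; rewrite -lead_coefE lead_coef_eq0.
case: (ex_minnP ex) => b hb hmin; exists b; split => // j hj.
by apply/eqP; apply: contraTT hj => /hmin; rewrite -leqNgt.
Qed.

Section Low.
Variable R : idomainType.
Implicit Types p r : {poly R}.

Definition lowlt (x : rat) p := forall b : nat, b%:Q < x -> p`_b = 0.
Definition lowle (x : rat) p := forall b : nat, b%:Q <= x -> p`_b = 0.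

Lemma lowlt_mul x y p r : lowlt x p -> lowlt y r -> lowlt (x + y) (p * r).
Proof.
move=> hp hr b hb. rewrite coefM. apply: big1 => -[j /=]; rewrite ltnS => hj _.
case: (ltP (j%:Q) x) => hx; first by rewrite hp // mul0r.
rewrite hr ?mulr0 //; rewrite natQB //; lra.
Qed.

Lemma lowle_mul x y p r : lowle x p -> lowlt y r -> lowle (x + y) (p * r).
Proof.
move=> hp hr b hb; rewrite coefM; apply: big1 => -[j /=]; rewrite ltnS => hj _.
case: (leP (j%:Q) x) => hx; first by rewrite hp // mul0r.
rewrite hr ?mulr0 //; rewrite natQB //; lra.
Qed.

Lemma lowle_mulr x y p r : lowlt x p -> lowle y r -> lowle (x + y) (p * r).
Proof. by move=> hp hr; rewrite mulrC addrC; apply: lowle_mul. Qed.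

Lemma lowlt_le x y p : lowlt x p -> y <= x -> lowlt y p.
Proof. by move=> h hy b hb; apply: h; lra. Qed.

Lemma lowlt_eq x y p : lowlt x p -> y = x -> lowlt y p.
Proof. by move=> h ->. Qed.

Lemma lowle_eq x y p : lowle x p -> y = x -> lowle y p.
Proof. by move=> h ->. Qed.

Lemma lowlt0 x : lowlt x 0.
Proof. by move=> b _; rewrite coef0. Qed.

Lemma lowltD x p r : lowlt x p -> lowlt x r -> lowlt x (p + r).
Proof. by move=> hp hr b hb; rewrite coefD hp ?hr ?addr0. Qed.

Lemma lowlt_compZX x (c : R) p : lowlt x p -> lowlt x (p \Po (c *: 'X)).
Proof. by move=> h b hb; rewrite coef_compZX h ?mulr0. Qed.

Lemma lowle_compZX x (c : R) p : lowle x p -> lowle x (p \Po (c *: 'X)).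
Proof. by move=> h b hb; rewrite coef_compZX h ?mulr0. Qed.

Lemma coef_mul_low n m p r : (forall j, (j < n)%N -> p`_j = 0) ->
  (forall j, (j < m)%N -> r`_j = 0) -> (p * r)`_(n + m) = p`_n * r`_m.
Proof.
move=> hp hr; rewrite coefM.
have hn : (n < (n + m).+1)%N by rewrite ltnS leq_addr.
rewrite (bigD1 (Ordinal hn)) //= addKn big1 ?addr0 //.
move=> [j hj] /=; rewrite -(inj_eq val_inj) /= => hjn.
case: (ltngtP j n) hjn => // hjn _; first by rewrite hp ?mul0r.
rewrite hr ?mulr0 //; rewrite ltnS in hj.
by rewrite -(ltn_add2l j) subnKC // ltn_add2r.
Qed.

End Low.
Arguments lowlt {R} x p. Arguments lowle {R} x p.
Lemma natQ_lt (n m : nat) : (n%:Q < m%:Q) = (n < m)%N.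
Proof. by rewrite ltr_int ltz_nat. Qed.
Lemma natQ_le (n m : nat) : (n%:Q <= m%:Q) = (n <= m)%N.
Proof. by rewrite ler_int lez_nat. Qed.
Arguments lowlt_mul {R x y p r}.
Arguments lowle_mul {R x y p r}.
Arguments lowle_mulr {R x y p r}.
Arguments lowlt_le {R x y p}.
Arguments lowlt_eq {R x y p}.
Arguments lowle_eq {R x y p}.
Arguments lowlt0 {R} x.
Arguments lowltD {R x p r}.
Arguments lowlt_compZX {R x c p}.
Arguments lowle_compZX {R x c p}.
Arguments coef_mul_low {R n m p r}.
Arguments lowest {R p}.


Section KqS.
Variable K : fieldType.
Local Notation Kq := (Kq K).
Local Notation KqM := (KqM K).
Local Notation qK := (qK K).

Lemma qK_neq0 : qK != 0.
Proof. by rewrite /qK tofrac_eq0 polyX_eq0. Qed.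

Definition sg (i : nat) (p : {poly Kq}) : {poly Kq} := p \Po (qK ^+ i *: 'X).

Definition wmul (C P : {poly {poly Kq}}) : {poly {poly Kq}} :=
  \sum_(i < size C) \sum_(j < size P) (C`_i * sg i P`_j) *: 'X^(i + j).

Lemma sigma_tofrac i (p : {poly Kq}) : sigma_pow i (tofrac p) = tofrac (sg i p).
Proof.
rewrite /sigma_pow /sg.
have [hd e] := fracE _ (tofrac p).
have hn : fnum (tofrac p) = p * fden (tofrac p).
  apply/eqP; rewrite -tofrac_eq tofracM.
  by rewrite {2}e mulfVK // tofrac_eq0.
have hd' : fden (tofrac p) \Po (qK ^+ i *: 'X) != 0.
  by rewrite compZX_eq0 // expf_neq0 // qK_neq0.
by rewrite hn comp_polyM tofracM mulfK // tofrac_eq0.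
Qed.

Lemma tofrac_inj : injective (@tofrac {poly Kq}).
Proof. by move=> x y /eqP; rewrite tofrac_eq => /eqP. Qed.

Lemma size_embedW (C : {poly {poly Kq}}) : size (embedW C) = size C.
Proof. by rewrite size_map_inj_poly //; apply: tofrac_inj. Qed.

Lemma embedW_inj : injective (@embedW K).
Proof. by apply: map_inj_poly; [apply: tofrac_inj | rewrite tofrac0]. Qed.

Lemma coef_embedW (C : {poly {poly Kq}}) i : (embedW C)`_i = tofrac C`_i.
Proof. by rewrite /embedW coef_map. Qed.

Lemma embedW_wmul C P : embedW (wmul C P) = omul (embedW C) (embedW P).
Proof.
rewrite /omul !size_embedW /wmul /embedW raddf_sum; apply: eq_bigr => i _.
rewrite raddf_sum; apply: eq_bigr => j _.
rewrite /= map_polyZ map_polyXn !coef_map /= rmorphM /= sigma_tofrac //.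
Qed.

Lemma omulZ (u : KqM) A B : u != 0 -> omul (u *: A) B = u *: omul A B.
Proof.
move=> hu; rewrite /omul size_scale // scaler_sumr; apply: eq_bigr => i _.
rewrite scaler_sumr; apply: eq_bigr => j _.
rewrite coefZ scalerA; congr (_ *: _); exact: (esym (mulrA _ _ _)).
Qed.

Lemma embedWZ (d : {poly Kq}) C : embedW (d *: C) = tofrac d *: embedW C.
Proof. by rewrite /embedW map_polyZ. Qed.

Lemma coef_wmul C P k :
  (wmul C P)`_k = \sum_(i < size C) \sum_(j < size P) (C`_i * sg i P`_j) *+ (k == (i + j)%N).
Proof.
rewrite /wmul coef_sum; apply: eq_bigr => i _; rewrite coef_sum; apply: eq_bigr => j _.
by rewrite coefZ coefXn mulr_natr.
Qed.

End KqS.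
Arguments wmul {K} C P.
Arguments sg {K} i p.
Arguments coef_wmul {K} C P k.


Section Good.
Variable R : idomainType.
Implicit Types Q : {poly {poly R}}.

Definition good (s x : rat) Q := forall k : nat, lowlt (x + s * k%:Q) Q`_k.

Lemma coef_nz_lt (T : nzRingType) (p : {poly T}) i : p`_i != 0 -> (i < size p)%N.
Proof. by move=> h; rewrite ltnNge; apply: contra h => hs; rewrite nth_default. Qed.

Lemma exists_min s Q : Q != 0 ->
  exists x, good s x Q /\ exists i b, Q`_i`_b != 0 /\ b%:Q = x + s * i%:Q.
Proof.
move=> hQ.
suff H : forall n, (exists i, (i < n)%N /\ Q`_i != 0) ->
  exists x, (forall k, (k < n)%N -> lowlt (x + s * k%:Q) Q`_k) /\
    exists i b, Q`_i`_b != 0 /\ b%:Q = x + s * i%:Q.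
  have [|x [hx hp]] := H (size Q).
    exists (size Q).-1; split; last by rewrite -lead_coefE lead_coef_eq0.
    by rewrite prednK // lt0n size_poly_eq0.
  exists x; split => // k; case: (ltnP k (size Q)) => hk; first exact: hx.
  by rewrite nth_default //; apply: lowlt0.
elim=> [[i [//]]|n IH [i [hi hnz]]].
case hQn: (Q`_n == 0).
  have hin : (i < n)%N.
    by rewrite ltn_neqAle -ltnS hi andbT; apply: contraNneq hnz => ->; rewrite hQn.
  have [x [hx hp]] := IH (ex_intro _ i (conj hin hnz)).
  exists x; split => // k; rewrite ltnS leq_eqVlt => /orP [/eqP ->|hk].
    by rewrite (eqP hQn); apply: lowlt0.
  exact: hx.
have [b0 [hb0 hlow]] := @lowest _ _ (negbT hQn).
have hlow' : lowlt ((b0%:Q - s * n%:Q) + s * n%:Q) Q`_n.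
  move=> b hb; apply: hlow; rewrite -natQ_lt; move: hb; rewrite addrNK.
  by [].
case: (boolP [exists j : 'I_n, Q`_j != 0]) => [/existsP [j hj]|hnone].
  have [x [hx hp]] := IH (ex_intro _ (nat_of_ord j) (conj (ltn_ord j) hj)).
  case: (leP x (b0%:Q - s * n%:Q)) => hxy.
    exists x; split => // k; rewrite ltnS leq_eqVlt => /orP [/eqP ->|hk]; last exact: hx.
    by apply: lowlt_le hlow' _; lra.
  exists (b0%:Q - s * n%:Q); split.
    move=> k; rewrite ltnS leq_eqVlt => /orP [/eqP ->|hk] //.
    by apply: lowlt_le (hx k hk) _; lra.
  by exists n, b0; split => //; ring.
exists (b0%:Q - s * n%:Q); split.
  move=> k; rewrite ltnS leq_eqVlt => /orP [/eqP ->|hk] //.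
  move: hnone; rewrite negb_exists => /forallP /(_ (Ordinal hk)) /=.
  by rewrite negbK => /eqP ->; apply: lowlt0.
by exists n, b0; split => //; ring.
Qed.

Definition achp s x Q k :=
  has (fun b : nat => (Q`_k`_b != 0) && (b%:Q == x + s * k%:Q)) (iota 0 (size Q`_k)).

Lemma achpP s x Q k (b : nat) : Q`_k`_b != 0 -> b%:Q = x + s * k%:Q -> achp s x Q k.
Proof.
move=> hnz hb; apply/hasP; exists b; last by rewrite hnz hb eqxx.
by rewrite mem_iota add0n /=; apply: coef_nz_lt.
Qed.

Lemma achp_le s x Q k (b : nat) : good s x Q -> ~~ achp s x Q k ->
  b%:Q <= x + s * k%:Q -> Q`_k`_b = 0.
Proof.
move=> hg hn hb; case: (ltP (b%:Q) (x + s * k%:Q)) => hlt; first exact: hg.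
have [//|hnz] := eqVneq (Q`_k`_b) 0; case/negP: hn; apply: (@achpP s x Q k b hnz); lra.
Qed.

Lemma extremal_min s x Q (i0 b0 : nat) : good s x Q -> Q`_i0`_b0 != 0 -> b0%:Q = x + s * i0%:Q ->
  exists i b : nat, [/\ (i <= i0)%N, Q`_i`_b != 0, b%:Q = x + s * i%:Q &
    forall k, (k < i)%N -> lowle (x + s * k%:Q) Q`_k].
Proof.
move=> hg hnz hb.
have ex : exists k, achp s x Q k by exists i0; apply: (@achpP s x Q i0 b0 hnz hb).
case: (ex_minnP ex) => i /hasP [b _ /andP [hbnz /eqP hbq]] hmin.
exists i, b; split => //; first by apply: hmin; apply: (@achpP s x Q i0 b0 hnz hb).
move=> k hk b' hb'; apply: achp_le hb' => //.
by apply: contraTN hk => /hmin; rewrite -leqNgt.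
Qed.

Lemma extremal_max s x Q (i0 b0 : nat) : good s x Q -> Q`_i0`_b0 != 0 -> b0%:Q = x + s * i0%:Q ->
  exists i b : nat, [/\ (i0 <= i)%N, Q`_i`_b != 0, b%:Q = x + s * i%:Q &
    forall k, (i < k)%N -> lowle (x + s * k%:Q) Q`_k].
Proof.
move=> hg hnz hb.
have ex : exists k, achp s x Q k by exists i0; apply: (@achpP s x Q i0 b0 hnz hb).
have ub : forall k, achp s x Q k -> (k <= size Q)%N.
  move=> k /hasP [b' _ /andP [h _]]; apply: ltnW; apply: coef_nz_lt.
  by apply: contraNneq h => ->; rewrite coef0.
case: (ex_maxnP ex ub) => i /hasP [b _ /andP [hbnz /eqP hbq]] hmax.
exists i, b; split => //; first by apply: hmax; apply: (@achpP s x Q i0 b0 hnz hb).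
move=> k hk b' hb'; apply: achp_le hb' => //.
by apply: contraTN hk => /hmax; rewrite -leqNgt.
Qed.

End Good.
Arguments good {R} s x Q.
Arguments exists_min {R} s Q.
Arguments extremal_min {R} s x Q i0 b0.
Arguments extremal_max {R} s x Q i0 b0.


Section Main.
Variable K : fieldType.
Local Notation Kq := (Kq K).

Lemma nz_of_coef (p : {poly Kq}) b : p`_b != 0 -> p != 0.
Proof. by apply: contraNneq => ->; rewrite coef0. Qed.

Lemma wmul_slope s (C P : {poly {poly Kq}}) : C != 0 -> slope_of P s -> slope_of (wmul C P) s.
Proof.
move=> hC [a1 [b1 [a2 [b2 [ha hn1 hn2 heq hsup]]]]].
set x := b1%:Q - s * a1%:Q.
have hgP : good s x P.
  move=> k b hb; apply/eqP; apply: contraTT hb => hnz; rewrite -leNgt.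
  have := hsup k b hnz; rewrite /x mulrBr; lra.
have e1 : b1%:Q = x + s * a1%:Q by rewrite /x; ring.
have e2 : b2%:Q = x + s * a2%:Q by rewrite heq /x; ring.
have [jm [bjm [hjm hnzm hbjm hlm]]] := extremal_min _ _ _ _ _ hgP hn1 e1.
have [jM [bjM [hjM hnzM hbjM hlM]]] := extremal_max _ _ _ _ _ hgP hn2 e2.
have [xC [hgC [i0 [c0 [hc0 he0]]]]] := exists_min s C hC.
have [im [bim [him hnzim hbim hlim]]] := extremal_min _ _ _ _ _ hgC hc0 he0.
have [iM [biM [hiM hnziM hbiM hliM]]] := extremal_max _ _ _ _ _ hgC hc0 he0.
set Q := wmul C P.
have hgQ : good s (xC + x) Q.
  move=> k; rewrite /Q coef_wmul.
  apply: (big_ind (lowlt (xC + x + s * k%:Q))); [exact: lowlt0|by move=> ? ? ? ?; apply: lowltD|move=> i _].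
  apply: (big_ind (lowlt (xC + x + s * k%:Q))); [exact: lowlt0|by move=> ? ? ? ?; apply: lowltD|move=> j _].
  case: eqP => [->|_]; last by rewrite mulr0n; apply: lowlt0.
  rewrite mulr1n; apply: (lowlt_eq (lowlt_mul (hgC i) (lowlt_compZX (hgP j))));
  rewrite natQD; ring.
have vanC : forall (i j b : nat), b%:Q = xC + x + s * (i + j)%N%:Q ->
    lowle (xC + s * i%:Q) C`_i -> (C`_i * sg i P`_j)`_b = 0.
  move=> i j b hb hl; apply: (lowle_mul hl (lowlt_compZX (hgP j))).
  by rewrite hb natQD mulrDr; lra.
have vanP : forall (i j b : nat), b%:Q = xC + x + s * (i + j)%N%:Q ->
    lowle (x + s * j%:Q) P`_j -> (C`_i * sg i P`_j)`_b = 0.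
  move=> i j b hb hl; apply: (lowle_mulr (hgC i) (lowle_compZX hl)).
  by rewrite hb natQD mulrDr; lra.
have single : forall (i1 j1 b : nat), (i1 < size C)%N -> (j1 < size P)%N ->
    (forall (i j : nat), (i < size C)%N -> (j < size P)%N -> (i + j = i1 + j1)%N ->
       (i, j) <> (i1, j1) -> (C`_i * sg i P`_j)`_b = 0) ->
    Q`_(i1 + j1)`_b = (C`_i1 * sg i1 P`_j1)`_b.
  move=> i1 j1 b hi1 hj1 hv; rewrite /Q coef_wmul coef_sum (bigD1 (Ordinal hi1)) //=.
  rewrite [X in _ + X = _]big1 ?addr0; last first.
    move=> [i hi] /=; rewrite -(inj_eq val_inj) /= => hii; rewrite coef_sum big1 // => -[j hj] _ /=.
    rewrite coefMn; case: eqP => [e|_]; last by rewrite mulr0n.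
    rewrite mulr1n; apply: hv => //.
    by case=> ee _; rewrite ee eqxx in hii.
  rewrite (bigD1 (Ordinal hj1)) // coefD coefMn eqxx mulr1n coef_sum big1 ?addr0 //.
  move=> [j hj] /=; rewrite -(inj_eq val_inj) /= => hjj; rewrite coefMn.
  case: eqP => [e|_]; last by rewrite mulr0n.
  by move/addnI: e => e; rewrite e eqxx in hjj.
have exact1 : forall (i1 j1 bi bj : nat), C`_i1`_bi != 0 -> bi%:Q = xC + s * i1%:Q ->
    P`_j1`_bj != 0 -> bj%:Q = x + s * j1%:Q -> (C`_i1 * sg i1 P`_j1)`_(bi + bj) != 0.
  move=> i1 j1 bi bj hci hbi hpj hbj.
  rewrite (coef_mul_low (n := bi) (m := bj) (p := C`_i1) (r := sg i1 P`_j1)).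
  1: rewrite /sg coef_compZX; apply: mulf_neq0; first exact: hci.
    apply: mulf_neq0; last exact: hpj.
    by do 2 apply: expf_neq0; exact: qK_neq0.
  - by move=> j hj; apply: hgC; rewrite -hbi natQ_lt.
  - by move=> j hj; apply: (lowlt_compZX (hgP j1)); rewrite -hbj natQ_lt.
have szC : forall i b, C`_i`_b != 0 -> (i < size C)%N.
  by move=> i b h; apply: coef_nz_lt; apply: nz_of_coef h.
have szP : forall i b, P`_i`_b != 0 -> (i < size P)%N.
  by move=> i b h; apply: coef_nz_lt; apply: nz_of_coef h.
have hmin : Q`_(im + jm)`_(bim + bjm) != 0.
  rewrite (single im jm (bim + bjm)%N (szC _ _ hnzim) (szP _ _ hnzm)); first exact: (exact1 _ _ _ _ hnzim hbim hnzm hbjm).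
  move=> i j _ _ e hne; case: (ltngtP i im) => hi.
  - by apply: vanC (hlim _ hi); rewrite e !natQD hbim hbjm; ring.
  - apply: vanP (hlm _ _); first by rewrite e !natQD hbim hbjm; ring.
    by rewrite -(ltn_add2l i) e ltn_add2r.
  - by move: e hne; rewrite hi => /addnI ->.
have hmax : Q`_(iM + jM)`_(biM + bjM) != 0.
  rewrite (single iM jM (biM + bjM)%N (szC _ _ hnziM) (szP _ _ hnzM)); first exact: (exact1 _ _ _ _ hnziM hbiM hnzM hbjM).
  move=> i j _ _ e hne; case: (ltngtP i iM) => hi.
  - apply: vanP (hlM _ _); first by rewrite e !natQD hbiM hbjM; ring.
    by rewrite -(ltn_add2l i) e ltn_add2r.
  - by apply: vanC (hliM _ hi); rewrite e !natQD hbiM hbjM; ring.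
  - by move: e hne; rewrite hi => /addnI ->.
exists (im + jm)%N, (bim + bjm)%N, (iM + jM)%N, (biM + bjM)%N; split.
- apply: (@leq_ltn_trans (iM + jm)%N); first by rewrite leq_add2r; exact: leq_trans him hiM.
  by rewrite ltn_add2l; apply: leq_ltn_trans hjm _; apply: leq_trans ha hjM.
- exact: hmin.
- exact: hmax.
- by rewrite !natQD hbim hbjm hbiM hbjM; ring.
- move=> a b hnz; rewrite leNgt; apply/negP => hlt.
  move/negP: hnz; apply; apply/eqP; apply: hgQ.
  apply: lt_le_trans hlt _; rewrite le_eqVlt; apply/orP; left; apply/eqP.
  rewrite !natQD hbim hbjm; ring.
Qed.
End Main.


Section Fin.
Variable K : fieldType.
Local Notation Kq := (Kq K).

Lemma slope_scale s (d : {poly Kq}) (A : {poly {poly Kq}}) :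
  d != 0 -> slope_of (d *: A) s -> slope_of A s.
Proof.
move=> hd [a1 [b1 [a2 [b2 [ha h1 h2 heq hsup]]]]].
have [v [hdv hdl]] := lowest hd.
have key : forall a, A`_a != 0 -> exists b', [/\ A`_a`_b' != 0,
    (forall j, (j < b')%N -> A`_a`_j = 0), (d *: A)`_a`_(v + b') != 0 &
    (forall j, (j < v + b')%N -> (d *: A)`_a`_j = 0)].
  move=> a ha0; have [b' [hb' hbl]] := lowest ha0.
  exists b'; split; [exact: hb'|exact: hbl| |].
    rewrite coefZ (coef_mul_low hdl hbl); apply: mulf_neq0; first exact: hdv.
    exact: hb'.
  move=> j hj; rewrite coefZ.
  have hl1 : lowlt v%:Q d by move=> k; rewrite natQ_lt; exact: hdl.
  have hl2 : lowlt b'%:Q A`_a by move=> k; rewrite natQ_lt; exact: hbl.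
  by apply: (lowlt_mul hl1 hl2); rewrite -natQD natQ_lt.
have nzA : forall a b, (d *: A)`_a`_b != 0 -> A`_a != 0.
  move=> a b; rewrite coefZ; apply: contraNneq => ->; rewrite mulr0 coef0; exact: eqxx.
have fix1 : forall a b, (d *: A)`_a`_b != 0 ->
   (forall a' b', newton_pt (d *: A) a' b' -> b%:Q + s * (a'%:Q - a%:Q) <= b'%:Q) ->
   exists b', [/\ A`_a`_b' != 0, b = (v + b')%N &
     forall a'' b'', A`_a''`_b'' != 0 -> b'%:Q + s * (a''%:Q - a%:Q) <= b''%:Q].
  move=> a b hnz hs.
  have [b' [hb' hbl hdb hdl']] := key a (nzA _ _ hnz).
  have e : b = (v + b')%N.
    apply/eqP; rewrite eqn_leq; apply/andP; split.
      have := hs a (v + b')%N hdb; rewrite subrr mulr0 addr0 natQ_le; exact.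
    rewrite leqNgt; apply/negP => hlt; move/negP: hnz; apply; apply/eqP; exact: hdl'.
  exists b'; split; [exact: hb'|exact: e|] => a'' b'' hnz''.
  have [c [hc hcl hdc _]] := key a'' (@nz_of_coef K _ _ hnz'').
  have hcb : (c <= b'')%N by rewrite leqNgt; apply/negP => hlt; move/negP: hnz''; apply; apply/eqP; exact: hcl.
  have := hs a'' (v + c)%N hdc; rewrite e !natQD.
  move: hcb; rewrite -natQ_le => hcb; lra.
have [b1' [hb1 e1 hs1]] := fix1 a1 b1 h1 hsup.
have hsup2 : forall a' b', newton_pt (d *: A) a' b' -> b2%:Q + s * (a'%:Q - a2%:Q) <= b'%:Q.
  move=> a' b' hn; have := hsup a' b' hn; rewrite heq; rewrite !mulrBr; lra.
have [b2' [hb2 e2 _]] := fix1 a2 b2 h2 hsup2.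
exists a1, b1', a2, b2'; split; [exact: ha|exact: hb1|exact: hb2| |exact: hs1].
move: heq; rewrite e1 e2 !natQD => heq; lra.
Qed.

Lemma slope_ext s (P Q : {poly {poly Kq}}) :
  (forall a b, newton_pt P a b = newton_pt Q a b) -> slope_of P s -> slope_of Q s.
Proof.
move=> h [a1 [b1 [a2 [b2 [ha h1 h2 heq hsup]]]]].
exists a1, b1, a2, b2; split; [exact: ha|rewrite -h; exact: h1|rewrite -h; exact: h2|exact: heq|].
by move=> a b; rewrite -h; exact: hsup.
Qed.

Lemma subst_q_eq0 (w : K) (f : Kq) : w != 0 -> (subst_q w f == 0) = (f == 0).
Proof.
move=> hw; have [hd e] := fracE _ f.
have hd' : fden f \Po (w *: 'X) != 0 by rewrite compZX_eq0.
rewrite /subst_q /= (@mulf_eq0 {fraction {poly K}}) invr_eq0 !tofrac_eq0 (negbTE hd') orbF (compZX_eq0 _ _ _ hw).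
apply/idP/idP => [/eqP h|/eqP hf].
  by rewrite e h tofrac0 mul0r.
have : tofrac (fnum f) / tofrac (fden f) == 0 :> {fraction {poly K}} by rewrite -e hf.
by rewrite (@mulf_eq0 {fraction {poly K}}) invr_eq0 !tofrac_eq0 (negbTE hd) orbF.
Qed.
End Fin.


Theorem proposition2 (K : fieldType)
  (charK0 : [pchar K] =i pred0)
  (roots_unity : forall n : nat, (0 < n)%N -> exists z : K, n.-primitive_root z)
  (P : {poly {poly Kq K}}) (hP : P != 0)
  (m : nat) (hm : (0 < m)%N) (w : K) (hw : w ^+ m = 1)
  (T : {poly {poly Kq K}}) (hT : is_tau m w P T) :
  WopMm m T /\ (forall s : rat, slope_of P s -> slope_of T s).
Proof.
move: hT => [A [u [A' [[hA0 [B hB] hAm hmin] [hu hemb hWA' hcf hTe]]]]].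
have hw0 : w != 0.
  apply/eqP => h; move: hw; rewrite h expr0n (negbTE (lt0n_neq0 hm)) => /eqP.
  by rewrite eq_sym oner_eq0.
have sub0 : subst_q w 0 = 0 by apply/eqP; rewrite subst_q_eq0 // eqxx.
have coefT : forall a b, T`_a`_b = subst_q w A'`_a`_b.
  move=> a b; rewrite hTe /subst_q_op coef_map_id0; last by rewrite map_poly0.
  by rewrite coef_map_id0.
split.
  by move=> j i hi; rewrite coefT (hWA' j i hi) sub0.
move=> s hs.
apply: (@slope_ext K s A').
  by move=> a b; rewrite /newton_pt coefT subst_q_eq0.
set B' := u *: B.
have hB' : embedW A' = omul B' (embedW P) by rewrite hemb hB omulZ.
clearbody B'.
pose n := size B'.
pose d := \prod_(i < n) fden B'`_i.
pose C' : {poly {poly Kq K}} :=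
  \poly_(i < n) (fnum B'`_i * \prod_(j < n | (j : nat) != i) fden B'`_j).
have hden : forall i, fden B'`_i != 0 by move=> i; have [] := fracE _ B'`_i.
have hd : d != 0 by apply/prodf_neq0 => i _; exact: hden.
have hC' : embedW C' = tofrac d *: B'.
  apply/polyP => i; rewrite coef_embedW coef_poly coefZ.
  case: (ltnP i n) => hi.
    rewrite /d [in RHS](bigD1 (Ordinal hi)) //=.
    rewrite [in RHS](eq_bigl (fun j : 'I_n => (j : nat) != i)); last first.
      by move=> j; rewrite -(inj_eq val_inj).
    have [_ e] := fracE _ B'`_i.
    rewrite !tofracM [X in _ = _ * X]e.
    have hf : tofrac (fden B'`_i) != 0 by rewrite tofrac_eq0.
    by rewrite [RHS]mulrC mulrA (divfK hf).
  by rewrite tofrac0 nth_default // mulr0.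
have hdA : d *: A' = wmul C' P.
  apply: embedW_inj; rewrite embedW_wmul embedWZ hC' hB' omulZ; first by [].
  by rewrite tofrac_eq0.
have hA'0 : A' != 0.
  apply: contraNneq hA0 => h; move: hemb; rewrite h /embedW map_poly0 => /esym/eqP.
  by rewrite scale_poly_eq0 (negbTE hu).
apply: (@slope_scale K s d A' hd); rewrite hdA; apply: (@wmul_slope K s C' P _ hs).
apply: contraNneq hA'0 => hC0; move: hdA; rewrite hC0 /wmul size_poly0 big_ord0 => /eqP.
by rewrite scale_poly_eq0 (negbTE hd).
Qed.
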